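(* Let $\mathbf{M}$ be a right proper model category and let $f:X\to Y$ be a weak equivalence in $\mathbf{M}$. Then the function $f_\ast:\pi_0(\mathbf{Triv}/X)\to\pi_0(\mathbf{Triv}/Y)$, induced by sending an object $W\to X$ to the composite $W\to X\xrightarrow{f}Y$, is a bijection.
   Context: For an object $X$ of $\mathbf{M}$ with terminal object $\ast$, $\mathbf{Triv}/X$ is the category whose objects are morphisms $W\to X$ such that $W\to\ast$ is a weak equivalence, and whose morphisms are commutative triangles over $X$; $\pi_0$ denotes the set of path components. Right proper means weak equivalences are stable under pullback along fibrations. *)

(* Defs.v *)
From Stdlib Require Import Relations.

Set Implicit Arguments.
Unset Strict Implicit.

Record Category := {
  Ob :> Type;
  Hom : Ob -> Ob -> Type;
  idm : forall a, Hom a a;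
  comp : forall a b c, Hom b c -> Hom a b -> Hom a c;
  comp_assoc : forall a b c d (h : Hom c d) (g : Hom b c) (f : Hom a b),
      comp h (comp g f) = comp (comp h g) f;
  comp_id_l : forall a b (f : Hom a b), comp (idm b) f = f;
  comp_id_r : forall a b (f : Hom a b), comp f (idm a) = f
}.

Arguments Hom {C} : rename.
Arguments idm {C} a : rename.
Arguments comp {C a b c} : rename.

Section Limits.
Variable C : Category.

Definition IsTerminal (t : C) : Prop :=
  forall X : C, exists h : Hom X t, forall h' : Hom X t, h' = h.

Definition IsInitial (i : C) : Prop :=
  forall X : C, exists h : Hom i X, forall h' : Hom i X, h' = h.

Definition IsPullback (X Y Z P : C) (f : Hom X Z) (g : Hom Y Z)
    (p1 : Hom P X) (p2 : Hom P Y) : Prop :=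
  comp f p1 = comp g p2 /\
  forall (Q : C) (q1 : Hom Q X) (q2 : Hom Q Y), comp f q1 = comp g q2 ->
    exists h : Hom Q P, (comp p1 h = q1 /\ comp p2 h = q2) /\
      forall h' : Hom Q P, comp p1 h' = q1 -> comp p2 h' = q2 -> h' = h.

Definition IsPushout (X Y Z P : C) (f : Hom Z X) (g : Hom Z Y)
    (i1 : Hom X P) (i2 : Hom Y P) : Prop :=
  comp i1 f = comp i2 g /\
  forall (Q : C) (q1 : Hom X Q) (q2 : Hom Y Q), comp q1 f = comp q2 g ->
    exists h : Hom P Q, (comp h i1 = q1 /\ comp h i2 = q2) /\
      forall h' : Hom P Q, comp h' i1 = q1 -> comp h' i2 = q2 -> h' = h.

Definition IsRetractOf (A B A' B' : C) (f : Hom A B) (g : Hom A' B') : Prop :=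
  exists (i : Hom A A') (r : Hom A' A) (j : Hom B B') (s : Hom B' B),
    comp r i = idm A /\ comp s j = idm B /\
    comp g i = comp j f /\ comp f r = comp s g.

Definition HasLLP (A B X Y : C) (i : Hom A B) (p : Hom X Y) : Prop :=
  forall (u : Hom A X) (v : Hom B Y), comp p u = comp v i ->
    exists h : Hom B X, comp h i = u /\ comp p h = v.

End Limits.

(** * Model categories (Quillen closed model category axioms MC1--MC5,
    with finite limits and colimits and non-functorial factorizations) *)
Record ModelCategory := {
  MC :> Category;
  weq : forall a b : MC, Hom a b -> Prop;
  fib : forall a b : MC, Hom a b -> Prop;
  cof : forall a b : MC, Hom a b -> Prop;
  mc_terminal : exists t : MC, IsTerminal t;
  mc_initial : exists i : MC, IsInitial i;
  mc_pullbacks : forall (X Y Z : MC) (f : Hom X Z) (g : Hom Y Z),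
      exists (P : MC) (p1 : Hom P X) (p2 : Hom P Y), IsPullback f g p1 p2;
  mc_pushouts : forall (X Y Z : MC) (f : Hom Z X) (g : Hom Z Y),
      exists (P : MC) (i1 : Hom X P) (i2 : Hom Y P), IsPushout f g i1 i2;
  weq_comp : forall a b c (f : Hom a b) (g : Hom b c),
      weq f -> weq g -> weq (comp g f);
  weq_cancel_l : forall a b c (f : Hom a b) (g : Hom b c),
      weq g -> weq (comp g f) -> weq f;
  weq_cancel_r : forall a b c (f : Hom a b) (g : Hom b c),
      weq f -> weq (comp g f) -> weq g;
  weq_retract : forall a b a' b' (f : Hom a b) (g : Hom a' b'),
      IsRetractOf f g -> weq g -> weq f;
  fib_retract : forall a b a' b' (f : Hom a b) (g : Hom a' b'),
      IsRetractOf f g -> fib g -> fib f;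
  cof_retract : forall a b a' b' (f : Hom a b) (g : Hom a' b'),
      IsRetractOf f g -> cof g -> cof f;
  lift_cof_trivfib : forall a b x y (i : Hom a b) (p : Hom x y),
      cof i -> fib p -> weq p -> HasLLP i p;
  lift_trivcof_fib : forall a b x y (i : Hom a b) (p : Hom x y),
      cof i -> weq i -> fib p -> HasLLP i p;
  fact_cof_trivfib : forall a b (f : Hom a b),
      exists (c : MC) (i : Hom a c) (p : Hom c b),
        cof i /\ fib p /\ weq p /\ comp p i = f;
  fact_trivcof_fib : forall a b (f : Hom a b),
      exists (c : MC) (i : Hom a c) (p : Hom c b),
        cof i /\ weq i /\ fib p /\ comp p i = f
}.

Arguments weq {M a b} : rename.
Arguments fib {M a b} : rename.
Arguments cof {M a b} : rename.

Definition RightProper (M : ModelCategory) : Prop :=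
  forall (X Y Z P : M) (f : Hom X Z) (g : Hom Y Z) (p1 : Hom P X) (p2 : Hom P Y),
    IsPullback f g p1 p2 -> fib g -> weq f -> weq p2.

Section Triv.
Variables (M : ModelCategory) (t : M).

(** objects: morphisms W -> X such that (the unique) W -> t is a weak equivalence *)
Record TrivOb (X : M) := {
  tw : M;
  tp : Hom tw X;
  tw_triv : exists h : Hom tw t, weq h
}.

Definition TrivHom (X : M) (a b : TrivOb X) : Type :=
  { h : Hom (tw a) (tw b) | comp (tp b) h = tp a }.

(** same path component of Triv/X: the equivalence relation generated by
    the existence of a morphism *)
Definition TrivConnected (X : M) : relation (TrivOb X) :=
  clos_refl_sym_trans (TrivOb X) (fun a b => inhabited (TrivHom a b)).

Definition trivPush (X Y : M) (f : Hom X Y) (a : TrivOb X) : TrivOb Y :=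
  {| tw := tw a; tp := comp f (tp a); tw_triv := tw_triv a |}.

End Triv.

(* Main.v *)
Require Import Defs.
From Stdlib Require Import Relations.
Set Implicit Arguments.
Unset Strict Implicit.

Definition Phi (M : ModelCategory) (t : M) (X Y : M) (f : Hom X Y)
  (c : TrivOb t Y) (a : TrivOb t X) : Prop :=
  exists (v : TrivOb t Y) (j : Hom (tw c) (tw v)),
    cof j /\ weq j /\ fib (tp v) /\ comp (tp v) j = tp c /\
    exists (b : TrivOb t X) (p2 : Hom (tw b) (tw v)),
      IsPullback f (tp v) (tp b) p2 /\ TrivConnected a b.

Lemma triv_of (M : ModelCategory) (t : M) (Ht : IsTerminal t) (A B : M)
  (g : Hom A B) : weq g -> (exists h : Hom A t, weq h) -> exists h : Hom B t, weq h.
Proof.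
  intros Hg [h Hh]. destruct (Ht B) as [hB HB]. exists hB.
  destruct (Ht A) as [hA HA].
  apply (weq_cancel_r (f:=g) (g:=hB) Hg).
  rewrite (HA (comp hB g)). rewrite <- (HA h). exact Hh.
Qed.

Lemma triv_of' (M : ModelCategory) (t : M) (Ht : IsTerminal t) (A B : M)
  (g : Hom A B) : weq g -> (exists h : Hom B t, weq h) -> exists h : Hom A t, weq h.
Proof.
  intros Hg [h Hh]. exists (comp h g). apply weq_comp; assumption.
Qed.

Lemma phi_exists (M : ModelCategory) (t : M) (Ht : IsTerminal t)
    (HRP : RightProper M) (X Y : M) (f : Hom X Y) (Hf : weq f) (c : TrivOb t Y) :
  exists (v : TrivOb t Y) (j : Hom (tw c) (tw v)),
    cof j /\ weq j /\ fib (tp v) /\ comp (tp v) j = tp c /\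
    exists (b : TrivOb t X) (p2 : Hom (tw b) (tw v)),
      IsPullback f (tp v) (tp b) p2.
Proof.
  destruct (fact_trivcof_fib (tp c)) as (V & j & q & Hj & Hwj & Hq & Hqj).
  assert (HV : exists h : Hom V t, weq h) by exact (triv_of Ht Hwj (tw_triv c)).
  pose (v := {| tw := V; tp := q; tw_triv := HV |} : TrivOb t Y).
  exists v, j. split; [exact Hj|]. split; [exact Hwj|]. split; [exact Hq|].
  split; [exact Hqj|].
  destruct (mc_pullbacks f q) as (P & p1 & p2 & HP).
  assert (Hp2 : weq p2) by exact (HRP _ _ _ _ _ _ _ _ HP Hq Hf).
  assert (HPt : exists h : Hom P t, weq h) by exact (triv_of' Ht Hp2 HV).
  exists ({| tw := P; tp := p1; tw_triv := HPt |} : TrivOb t X), p2. exact HP.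
Qed.

Lemma phi_exists' (M : ModelCategory) (t : M) (Ht : IsTerminal t)
    (HRP : RightProper M) (X Y : M) (f : Hom X Y) (Hf : weq f) (c : TrivOb t Y) :
  exists a, Phi f c a.
Proof.
  destruct (phi_exists Ht HRP Hf c) as (v & j & H1 & H2 & H3 & H4 & b & p2 & H5).
  exists b. exists v, j. repeat split; try assumption. exists b, p2. split; [exact H5|].
  apply rst_refl.
Qed.

Lemma phi_step (M : ModelCategory) (t : M) (X Y : M) (f : Hom X Y)
  (c c' : TrivOb t Y) (h : TrivHom c c') (a a' : TrivOb t X) :
  Phi f c a -> Phi f c' a' -> TrivConnected a a'.
Proof.
  intros (v & j & Hj & Hwj & Hq & Hqj & b & p2 & HP & Hab)
         (v' & j' & Hj' & Hwj' & Hq' & Hqj' & b' & p2' & HP' & Hab').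
  destruct h as [h Hh].
  assert (Hsq : comp (tp v') (comp j' h) = comp (tp v) j).
  { rewrite comp_assoc, Hqj', Hh, Hqj. reflexivity. }
  destruct (lift_trivcof_fib Hj Hwj Hq' Hsq) as (l & _ & Hl).
  destruct HP as [HPc _]. destruct HP' as [_ HPu].
  assert (Hc : comp f (tp b) = comp (tp v') (comp l p2)).
  { rewrite comp_assoc, Hl. exact HPc. }
  destruct (HPu _ _ _ Hc) as (k & (Hk1 & _) & _).
  apply rst_trans with b; [exact Hab|].
  apply rst_trans with b'.
  - apply rst_step. constructor. exact (exist _ k Hk1).
  - apply rst_sym. exact Hab'.
Qed.

Lemma phi_conn (M : ModelCategory) (t : M) (Ht : IsTerminal t)
    (HRP : RightProper M) (X Y : M) (f : Hom X Y) (Hf : weq f)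
    (c c' : TrivOb t Y) :
  TrivConnected c c' -> forall a a', Phi f c a -> Phi f c' a' -> TrivConnected a a'.
Proof.
  induction 1 as [c c' [h] | c | c c' _ IH | c c' c'' _ IH1 _ IH2]; intros a a' Ha Ha'.
  - exact (phi_step h Ha Ha').
  - refine (phi_step (exist _ (idm (tw c)) _) Ha Ha'). apply comp_id_r.
  - apply rst_sym. exact (IH _ _ Ha' Ha).
  - destruct (phi_exists' Ht HRP Hf c') as [am Ham].
    apply rst_trans with am; [exact (IH1 _ _ Ha Ham) | exact (IH2 _ _ Ham Ha')].
Qed.

Lemma phi_push (M : ModelCategory) (t : M) (Ht : IsTerminal t)
    (HRP : RightProper M) (X Y : M) (f : Hom X Y) (Hf : weq f) (a : TrivOb t X) :
  Phi f (trivPush f a) a.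
Proof.
  destruct (phi_exists Ht HRP Hf (trivPush f a)) as (v & j & H1 & H2 & H3 & H4 & b & p2 & H5).
  exists v, j. repeat split; try assumption. exists b, p2. split; [exact H5|].
  destruct H5 as [_ Hu].
  assert (Hc : comp f (tp a) = comp (tp v) j) by (rewrite H4; reflexivity).
  destruct (Hu _ _ _ Hc) as (k & (Hk1 & _) & _).
  apply rst_step. constructor. exact (exist _ k Hk1).
Qed.

Unset Implicit Arguments.
Set Strict Implicit.
Theorem mainTheorem13 (M : ModelCategory) (t : M) (Ht : IsTerminal t)
    (HRP : RightProper M) (X Y : M) (f : Hom X Y) (Hf : weq f) :
  (forall a b : TrivOb t X, TrivConnected a b ->
      TrivConnected (trivPush f a) (trivPush f b)) /\
  (forall a b : TrivOb t X, TrivConnected (trivPush f a) (trivPush f b) ->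
      TrivConnected a b) /\
  (forall c : TrivOb t Y, exists a : TrivOb t X, TrivConnected (trivPush f a) c).
Proof.
  split; [|split].
  - intros a b H. induction H as [a b [[h Hh]] | a | a b _ IH | a b c _ IH1 _ IH2].
    + apply rst_step. constructor. exists h. simpl. rewrite <- comp_assoc, Hh. reflexivity.
    + apply rst_refl.
    + apply rst_sym; exact IH.
    + apply rst_trans with (trivPush f b); assumption.
  - intros a b H. exact (phi_conn Ht HRP Hf H (phi_push Ht HRP Hf a) (phi_push Ht HRP Hf b)).
  - intros c.
    destruct (phi_exists Ht HRP Hf c) as (v & j & H1 & H2 & H3 & H4 & b & p2 & H5).
    exists b. apply rst_trans with v.
    + apply rst_step. constructor. exists p2. simpl. destruct H5 as [H5 _]. symmetry. exact H5.
    + apply rst_sym. apply rst_step. constructor. exists j. exact H4.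
Qed.
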